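(* Let $G$ be a graph with $m$ edges whose vertex set is partitioned as $V(G)=A\sqcup C$, where $|A|$ is bounded by a fixed constant, $G[A]\cong M$, $C$ is an independent set, and all but at most one vertex of $C$ are adjacent to every vertex of $A$. Then $$\lambda(G)=\sqrt{m}+\frac{e(M)}{v(M)}+O(m^{-1/2}),$$ where the implied constant depends only on the bound on $|A|$.
   Context: All graphs are finite and simple. $e(M)$ and $v(M)$ denote the numbers of edges and vertices of $M$; $\lambda(G)$ is the spectral radius of the adjacency matrix of $G$. *)

(* Defs.v *)
From HB Require Import structures.
From mathcomp Require Import all_boot all_order all_algebra all_field.
Set Implicit Arguments. Unset Strict Implicit. Unset Printing Implicit Defensive.
Import Order.TTheory GRing.Theory Num.Theory.
Local Open Scope ring_scope.

(* A finite simple graph: vertex type T : finType, adjacency e : rel T,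
   assumed symmetric and irreflexive in the theorem. *)

Definition edges (T : finType) (e : rel T) : {set {set T}} :=
  [set E : {set T} | [exists x, exists y, e x y && (E == [set x; y])]].

Definition nedges (T : finType) (e : rel T) : nat := #|edges e|.

Definition nedges_in (T : finType) (e : rel T) (A : {set T}) : nat :=
  #|[set E in edges e | E \subset A]|.

Definition adjmx (T : finType) (e : rel T) : 'M[algC]_(#|T|) :=
  \matrix_(i, j) (e (enum_val i) (enum_val j))%:R.

Definition is_spectral_radius (n : nat) (M : 'M[algC]_n) (r : algC) : Prop :=
  (exists2 z, eigenvalue M z & `|z| = r) /\
  (forall z, eigenvalue M z -> `|z| <= r).

(* Main.v *)
Require Import Defs.
From HB Require Import structures.
From mathcomp Require Import all_boot all_order all_algebra all_field.
From mathcomp Require Import ring lra zify.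
Import Order.TTheory GRing.Theory Num.Theory Num.Def.

Section Comb.

Lemma set2_eq (T : finType) (a b x y : T) :
  a != b -> [set a; b] = [set x; y] -> (a = x /\ b = y) \/ (a = y /\ b = x).
Proof.
move=> ab H.
have ha : a \in [set x; y] by rewrite -H set21.
have hb : b \in [set x; y] by rewrite -H set22.
move: ab; case/set2P: ha => ->; case/set2P: hb => ->; rewrite ?eqxx //;
  by [left | right].
Qed.

Lemma sum_bool_card (I : finType) (P b : pred I) :
  \sum_(i | P i) (b i : nat) = \sum_(i | P i && b i) 1.
Proof. by rewrite big_mkcondr; apply: eq_bigr => i _; case: (b i). Qed.

Lemma pairs2 (T : finType) (e : rel T) (S : {set T}) :
  symmetric e -> irreflexive e ->
  (nedges_in e S).*2 = \sum_(u in S) \sum_(v in S) e u v.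
Proof.
move=> esym eirr.
rewrite pair_big /= sum_bool_card.
set ES := [set E in edges e | E \subset S].
rewrite (partition_big (fun q : T * T => [set q.1; q.2]) (mem ES)) /=; last first.
  move=> [x y] /= /andP[/andP[xS yS] exy].
  rewrite inE; apply/andP; split.
    by rewrite inE; apply/existsP; exists x; apply/existsP; exists y; rewrite exy eqxx.
  by apply/subsetP => z /set2P [->|->].
rewrite /nedges_in -/ES -muln2 -sum_nat_const; apply: eq_bigr => E.
rewrite inE => /andP[]; rewrite inE => /existsP[x /existsP[y /andP[exy /eqP ->]]] sS.
rewrite sum1dep_card.
have xy : x != y by apply: contraTneq exy => ->; rewrite eirr.
suff -> : [set q : T * T | ((q.1 \in S) && (q.2 \in S) && e q.1 q.2) && ([set q.1; q.2] == [set x; y])]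
   = [set (x, y); (y, x)].
  have h : (x, y) != (y, x) by apply: contra xy => /eqP [->].
  by rewrite cards2 h.
apply/setP => -[a b]; rewrite !inE /=.
apply/idP/idP.
  move=> /andP[/andP[/andP[aS bS] eab] /eqP hE].
  have ab : a != b by apply: contraTneq eab => ->; rewrite eirr.
  by case: (@set2_eq _ _ _ _ _ ab hE) => -[-> ->]; rewrite eqxx ?orbT.
have xS : x \in S by apply: (subsetP sS); rewrite set21.
have yS : y \in S by apply: (subsetP sS); rewrite set22.
case/orP => /eqP [-> ->]; rewrite ?xS ?yS ?exy ?eqxx //=.
by rewrite esym exy setUC eqxx.
Qed.
Lemma sum_splitAn (T : finType) (A : {set T}) (F : T -> nat) :
  (\sum_i F i = \sum_(i in A) F i + \sum_(i in ~: A) F i)%N.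
Proof. by rewrite (bigID (mem A)) /=; congr (_ + _); apply: eq_bigl => i; rewrite ?inE. Qed.

Lemma sum_b_le (T : finType) (A : {set T}) (e : T -> bool) :
  (\sum_(v in A) e v <= #|A|)%N.
Proof.
rewrite -sum1_card; apply: leq_sum => v _; exact: leq_b1.
Qed.

Lemma sum_sub_le (T : finType) (P : pred T) (F : T -> nat) :
  (\sum_(v | P v) F v <= \sum_v F v)%N.
Proof.
rewrite [X in (X <= _)%N]big_mkcond; apply: leq_sum => v _; by case: (P v).
Qed.

Lemma sum_ind_card (T : finType) (B : {set T}) :
  (\sum_v (v \in B) = #|B|)%N.
Proof. by rewrite -sum1_card [RHS]big_mkcond; apply: eq_bigr => v _; case: (v \in B). Qed.

Lemma cc_lower (T : finType) (e : rel T) (A : {set T}) u :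
  symmetric e -> u \in A ->
  (#|[set x | (x \notin A) && ~~ [forall a in A, e x a]]| <= 1)%N ->
  (#|~: A| <= (\sum_(v in ~: A) e u v).+1)%N.
Proof.
move=> esym uA hB; set B := [set x | _ & _] in hB.
apply: (@leq_trans (\sum_(v in ~: A) (e u v + (v \in B)))%N).
  rewrite -sum1_card; apply: leq_sum => v; rewrite inE => vA.
  case vB: (v \in B); first by rewrite addn1.
  move: vB; rewrite inE vA /=. move=> /negbFE /forallP /(_ u); rewrite uA /= esym => ->.
  by [].
rewrite big_split /= -addn1 leq_add2l.
apply: leq_trans hB; rewrite -sum_ind_card.
rewrite [X in (X <= _)%N]big_mkcond; apply: leq_sum => v _; by case: (_ \in ~: A).
Qed.

Lemma nedges_setT (T : finType) (e : rel T) : nedges e = nedges_in e [set: T].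
Proof. by rewrite /nedges /nedges_in; apply: eq_card => E; rewrite !inE subsetT andbT. Qed.

Lemma edge_split (T : finType) (e : rel T) (A : {set T}) :
  symmetric e -> irreflexive e ->
  (forall x y, x \notin A -> y \notin A -> ~~ e x y) ->
  nedges e = (nedges_in e A + \sum_(u in A) \sum_(v in ~: A) e u v)%N.
Proof.
move=> esym eirr Cind.
apply: double_inj; rewrite doubleD nedges_setT !pairs2 //.
have sT (F : T -> nat) : (\sum_(u in [set: T]) F u = \sum_u F u)%N.
  by apply: eq_bigl => u; rewrite in_setT.
rewrite sT (eq_bigr (fun u => \sum_(v in A) e u v + \sum_(v in ~: A) e u v)%N); last first.
  by move=> u _; rewrite sT (@sum_splitAn _ A).
rewrite big_split /= (@sum_splitAn _ A (fun u => \sum_(v in A) e u v)%N).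
rewrite (@sum_splitAn _ A (fun u => \sum_(v in ~: A) e u v)%N).
rewrite [X in (_ + _ + (_ + X))%N]big1 ?addn0; last first.
  move=> u; rewrite inE => uA; apply: big1 => v; rewrite inE => vA.
  by rewrite (negbTE (Cind _ _ uA vA)).
rewrite exchange_big /= -addnn addnA; congr (_ + _ + _)%N.
rewrite exchange_big /=; apply: eq_bigr => u _; apply: eq_bigr => v _; by rewrite esym.
Qed.

End Comb.

Section Spec.
Local Open Scope ring_scope.
Local Open Scope ring_scope.

Lemma sumT (T : finType) (F : T -> algC) :
  \sum_(t : T) F t = \sum_(i < #|T|) F (enum_val i).
Proof.
rewrite (reindex (fun i : 'I_#|T| => enum_val i)) //.
by exists enum_rank => i _; rewrite ?enum_valK ?enum_rankK.
Qed.

Lemma exists_argmax (I : finType) (i0 : I) (F : I -> algC) :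
  (forall i, F i \is Creal) -> exists i, forall j, F j <= F i.
Proof.
move=> FR; pose G i : algR := in_algR (FR i).
case: (@arg_maxP _ algR I i0 predT G) => // i _ Hi.
by exists i => j; have := Hi j isT.
Qed.

Lemma collatz (T : finType) (e : rel T) (u : T -> algC) (mu : algC) :
  symmetric e -> (forall t, 0 < u t) ->
  (forall t, \sum_t' (e t t')%:R * u t' <= mu * u t) ->
  forall z, eigenvalue (adjmx e) z -> `|z| <= mu.
Proof.
move=> esym upos hu z /eigenvalueP [v hv vn0].
pose f t := v 0 (enum_rank t).
have hz t : z * f t = \sum_t' (e t' t)%:R * f t'.
  move/rowP: (hv) => /(_ (enum_rank t)).
  rewrite !mxE => <-.
  rewrite [RHS]sumT; apply: eq_bigr => i _.
  by rewrite /f enum_valK !mxE enum_rankK mulrC.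
have [i0 vi0] : exists i, v 0 i != 0.
  apply/existsP; apply: contraR vn0 => /existsPn H.
  by apply/eqP/rowP => i; rewrite mxE; apply/eqP/negPn/H.
pose t0 := enum_val i0.
have f0 : f t0 != 0 by rewrite /f /t0 enum_valK.
pose rat t := `|f t| / u t.
have ratR t : rat t \is Creal.
  by rewrite rpredM ?normr_real // rpredV gtr0_real.
have [tm Htm] := @exists_argmax _ t0 _ ratR.
set rho := rat tm.
have frho t : `|f t| <= rho * u t.
  by have := Htm t; rewrite /rat ler_pdivrMr.
have rho0 : 0 < rho.
  apply: lt_le_trans (Htm t0); rewrite /rat divr_gt0 ?normr_gt0 //.
have fm : `|f tm| = rho * u tm.
  by rewrite /rho /rat divfK // gt_eqF.
have fm0 : 0 < `|f tm| by rewrite fm mulr_gt0.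
suff : `|z| * `|f tm| <= mu * `|f tm| by rewrite ler_pM2r.
rewrite -normrM hz.
apply: le_trans (ler_norm_sum _ _ _) _.
apply: le_trans (_ : \sum_t' (e tm t')%:R * (rho * u t') <= _).
  apply: ler_sum => t' _; rewrite normrM esym normr_nat.
  by apply: ler_wpM2l; [exact: ler0n | exact: frho].
under eq_bigr => t' _ do rewrite mulrCA.
rewrite -mulr_sumr fm mulrCA.
by apply: ler_wpM2l; [exact: ltW | exact: hu].
Qed.

Local Open Scope ring_scope.

Lemma rayleigh_mx n (M : 'M[algC]_n) (xv : 'rV[algC]_n) (r : algC) :
  M \is hermsymmx -> (forall i, xv 0 i \is Creal) ->
  (forall z, eigenvalue M z -> `|z| <= r) ->
  (xv *m M *m xv^T) 0 0 <= r * (xv *m xv^T) 0 0.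
Proof.
move=> Mh xR hr.
have /orthomx_spectralP := hermitian_normalmx Mh.
set P := spectralmx M; set D := spectral_diag M => MPD.
have Pu : P \is unitarymx by apply: spectral_unitarymx.
have Pun : P \in unitmx by apply: spectral_unit.
set Pc := map_mx conjC P^T.
have PPc : P *m Pc = 1%:M by apply/unitarymxP.
have PcP : Pc *m P = 1%:M by apply: mulmx1C.
have MPc : M = Pc *m diag_mx D *m P by rewrite MPD invmx_unitary.
have DR k : D 0 k \is Creal.
  by have /mxOverP := hermitian_spectral_diag_real Mh; apply.
have Dr k : D 0 k <= r.
  apply: le_trans (real_ler_norm (DR k)) _; apply: hr.
  apply/eigenvalueP; exists (row k P).
    rewrite -row_mul MPc !mulmxA PPc mul1mx mul_diag_mx.
    by apply/rowP => j; rewrite !mxE.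
  apply/eqP => /rowP Hk.
  have := congr1 (fun A : 'M_n => A k k) PPc; rewrite !mxE eqxx /=.
  rewrite big1; first by move=> /(congr1 (fun x => x == 0)); rewrite eqxx oner_eq0.
  move=> j _; by have := Hk j; rewrite !mxE => ->; rewrite mul0r.
set y := xv *m Pc.
have wE : P *m xv^T = map_mx conjC y^T.
  apply/matrixP => k i; rewrite !ord1 !mxE rmorph_sum; apply: eq_bigr => j _.
  by rewrite !mxE rmorphM /= conjCK (conj_Creal (xR j)) mulrC.
have gen (yy : 'rV[algC]_n) (dd : 'rV[algC]_n) :
    (yy *m diag_mx dd *m map_mx conjC yy^T) 0 0 = \sum_k dd 0 k * `|yy 0 k| ^+ 2.
  rewrite mul_mx_diag mxE; apply: eq_bigr => k _.
  by rewrite !mxE normCK mulrAC mulrC.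
have QE : (xv *m M *m xv^T) 0 0 = \sum_k D 0 k * `|y 0 k| ^+ 2.
  by rewrite MPc !mulmxA -/y -(mulmxA _ P) wE gen.
have SE : (xv *m xv^T) 0 0 = \sum_k `|y 0 k| ^+ 2.
  have -> : xv *m xv^T = y *m (P *m xv^T) by rewrite /y -mulmxA (mulmxA Pc) PcP mul1mx.
  rewrite wE.
  transitivity ((y *m diag_mx (const_mx 1) *m map_mx conjC y^T) 0 0).
    by rewrite diag_const_mx mulmx1.
  rewrite gen.
  by apply: eq_bigr => k _; rewrite mxE mul1r.
rewrite QE SE mulr_sumr; apply: ler_sum => k _.
by apply: ler_wpM2r => //; apply: exprn_ge0.
Qed.

End Spec.

Section Num.
Local Open Scope ring_scope.
Local Open Scope ring_scope.

Lemma lower_num (R : realFieldType) (s a e0 q N X c : R) :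
  0 < s -> 1 <= a -> 0 <= e0 -> e0 + e0 <= a * a -> 0 <= q -> q <= a^+3 ->
  s^+2 = e0 + X -> 0 <= X -> a*N <= X + a -> X <= a*N -> (a+1)^+4 <= c ->
  (s + e0/a - c/s) * (a*s^+2 + 4*e0*s + q + a^+2*N)
    <= 2*e0*s^+2 + 2*s*q + 2*a*(N-1)*(a*s+2*e0).
Proof.
move=> s0 a1 e00 e0a' p0 pa sX X0 XN1' XN ca.
have e0a : 2*e0 <= a^+2 by rewrite expr2; lra.
have XN1 : a*(N-1) <= X by lra.
have a0 : 0 < a by lra.
set th := a*N - X.
have th0 : 0 <= th by rewrite /th; lra.
have tha : th <= a by rewrite /th; lra.
have key : a*s*(2*e0*s^+2 + 2*s*q + 2*a*(N-1)*(a*s+2*e0))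
   - (a*s^+2 + e0*s - a*c) * (a*s^+2 + 4*e0*s + q + a^+2*N)
  = s^+2*(a*q + a^+2*(th-e0) - 2*a^+3 - 4*e0^+2 + 2*a^+2*c)
    + s*e0*(3*a*th - 3*a*e0 - 4*a^+2 - q + 4*a*c) + a*c*(q + a*th - a*e0).
  rewrite /th; have -> : X = s^+2 - e0 by lra.
  ring.
have c1 : a^+4 + 4*a^+3 <= c.
  have : a^+4 + 4*a^+3 <= (a+1)^+4.
    have a2 : 0 <= a^+2 by nra.
    have a3 : 0 <= a^+3 by rewrite exprS; nra.
    rewrite !exprS !expr0 !mulr1 in a2 a3 *; nra.
  lra.
have c0 : 0 <= c.
  have : 0 <= (a+1)^+4 by apply: exprn_ge0; lra.
  lra.
have C2 : a^+2*c <= a*q + a^+2*(th-e0) - 2*a^+3 - 4*e0^+2 + 2*a^+2*c.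
  suff : a^+2*e0 + 2*a^+3 + 4*e0^+2 <= a^+2*c.
    have : 0 <= a*q by nra.
    have : 0 <= a^+2*th by nra.
    lra.
  have e0b : e0 <= a^+2 by nra.
    have h1 : a^+2*e0 <= a^+4 by rewrite !exprS !expr0 !mulr1 in e0b *; nra.
    have h2 : 4*e0^+2 <= a^+4 by rewrite !exprS !expr0 !mulr1 in e0a *; nra.
    have h3 : 2*a^+3 <= 2*a^+4 by rewrite !exprS !expr0 !mulr1; nra.
    have h4 : 2*a^+2 + 2*a <= c.
      have : 2*a^+2 + 2*a <= a^+4 + 4*a^+3 by rewrite !exprS !expr0 !mulr1; nra.
      lra.
    have h5 : 2*a^+4 + 2*a^+3 <= a^+2*c.
      have -> : 2*a^+4 + 2*a^+3 = a^+2 * (2*a^+2 + 2*a) by ring.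
      apply: ler_wpM2l => //; nra.
    lra.
have C1 : 0 <= 3*a*th - 3*a*e0 - 4*a^+2 - q + 4*a*c.
  have : 3*a*e0 + 4*a^+2 + q <= 4*a*c.
    have h1 : 3*a*e0 <= 3*a^+3 by rewrite !exprS !expr0 !mulr1 in e0a *; nra.
    have h2 : 4*a^+2 <= 4*a^+3 by rewrite !exprS !expr0 !mulr1; nra.
    have h3 : a^+3 <= a^+4 by rewrite !exprS !expr0 !mulr1; nra.
    have h4 : 0 <= a^+3 by rewrite !exprS !expr0 !mulr1; nra.
    have h5 : a^+4 <= a*c by nra.
    have h6 : a^+3 <= a*c by nra.
    nra.
  have : 0 <= 3*a*th by nra.
  lra.
have C0 : - (a^+2*c*e0) <= a*c*(q + a*th - a*e0).
  have : 0 <= a*c*(q + a*th) by apply: mulr_ge0; nra.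
  have -> : a*c*(q + a*th - a*e0) = a*c*(q + a*th) - a^+2*c*e0 by ring.
  lra.
have D : 0 <= a*s*(2*e0*s^+2 + 2*s*q + 2*a*(N-1)*(a*s+2*e0))
   - (a*s^+2 + e0*s - a*c) * (a*s^+2 + 4*e0*s + q + a^+2*N).
  rewrite key.
  have h1 : s^+2 * (a^+2*c) <= s^+2 * (a*q + a^+2*(th-e0) - 2*a^+3 - 4*e0^+2 + 2*a^+2*c).
    by apply: ler_wpM2l => //; nra.
  have h2 : 0 <= s*e0*(3*a*th - 3*a*e0 - 4*a^+2 - q + 4*a*c) by apply: mulr_ge0 => //; nra.
  have h3 : a^+2*c*e0 <= s^+2*(a^+2*c).
    rewrite sX; have : 0 <= a^+2*c*X by rewrite !mulr_ge0 //; nra.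
    lra.
  lra.
have -> : s + e0/a - c/s = (a*s^+2 + e0*s - a*c) / (a*s).
  field; apply/andP; split; rewrite gt_eqF //; lra.
rewrite mulrAC ler_pdivrMr; last by apply: mulr_gt0 => //; lra.
lra.
Qed.
Lemma upper_num (R : realFieldType) (s a e0 N X c : R) :
  0 < s -> 1 <= a -> 0 <= e0 -> e0 + e0 <= a * a ->
  s^+2 = e0 + X -> a*N <= X + a + a -> 0 <= N -> (a+1)^+4 <= c ->
  let mu := s + e0/a + c/s in
  2*a <= mu /\ N/mu * (a + 2*e0/mu + a*(2*a^+2)/mu^+2) <= mu.
Proof.
move=> s0 a1 e00 e0a' sX XN' N0 ca mu.
have e0a : 2*e0 <= a^+2 by rewrite expr2; lra.
have XN : a*(N-2) <= X by lra.
have a0 : 0 < a by lra.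
have c1 : a^+2 + 2*a <= c.
  have : a^+2 + 2*a <= (a+1)^+4.
    have a2 : 0 <= a^+2 by nra.
    have a3 : 0 <= a^+3 by rewrite exprS; nra.
    rewrite !exprS !expr0 !mulr1 in a2 a3 *; nra.
  lra.
set f := e0/a.
have ef : e0 = a*f by rewrite /f mulrC divfK ?gt_eqF.
have f0 : 0 <= f by rewrite /f divr_ge0 //; lra.
have fa : 2*f <= a.
  rewrite ef in e0a; rewrite expr2 in e0a; nra.
set g := c/s.
have sg : s*g = c by rewrite /g mulrC divfK ?gt_eqF.
have g0 : 0 <= g by rewrite /g divr_ge0 //; nra.
have mue : mu = s + f + g by [].
have mu2 : s^+2 + 2*s*f + 2*c <= mu^+2.
  rewrite mue -sg; nra.
have mua : 2*a <= mu.
  have : 4*a^+2 <= (s+g)^+2.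
    have : a^+2 <= s*g by rewrite sg; lra.
    have : 0 <= (s-g)^+2 by apply: sqr_ge0.
    nra.
  rewrite mue.
  have : 0 <= s + g by lra.
  nra.
have mus : s <= mu by rewrite mue; lra.
have mu0 : 0 < mu by lra.
split => //.
have key : N/mu * (a + 2*e0/mu + a*(2*a^+2)/mu^+2)
   = (N*a*(mu^+2 + 2*f*mu + 2*a^+2)) / mu^+3.
  rewrite ef; field; rewrite gt_eqF //.
rewrite key ler_pdivrMr; last by apply: exprn_gt0.
set L := s^+2 - a*f + 2*a.
have NL : N*a <= L by rewrite /L -ef sX; lra.
have h1 : N*a*(mu^+2 + 2*f*mu + 2*a^+2) <= L*(mu^+2 + 2*f*mu + 2*a^+2).
  apply: ler_wpM2r => //; nra.
have h2 : 2*f*mu*L <= 2*f*(mu^+2*s + mu^+2).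
  have : mu*L <= mu^+2*s + mu^+2.
    have : mu*s^+2 <= mu^+2*s by rewrite !expr2; nra.
    have : 2*a*mu <= mu^+2 by rewrite expr2; nra.
    have : 0 <= mu*(a*f) by nra.
    rewrite /L; lra.
  move=> h; have : 0 <= 2*f by lra.
  nra.
have h3 : 2*a^+2*L <= 2*a^+2*mu^+2 + a*mu^+2.
  have m4 : 4*a^+2 <= mu^+2 by rewrite !expr2; nra.
  have : 4*a^+3 <= a*mu^+2.
    have -> : 4*a^+3 = a*(4*a^+2) by ring.
    by apply: ler_wpM2l => //; lra.
  have : s^+2 <= mu^+2 by rewrite !expr2; nra.
  have : 0 <= a*f by nra.
  have : 0 <= a^+2 by nra.
  rewrite /L; nra.
have h4 : L * mu^+2 + 2*f*(mu^+2*s + mu^+2) + 2*a^+2*mu^+2 + a*mu^+2 <= mu^+2 * mu^+2.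
  have : L + 2*f*s + 2*f + 2*a^+2 + a <= mu^+2.
    have : 0 <= a*f by nra.
    rewrite /L; nra.
  move=> h; have -> : L * mu^+2 + 2*f*(mu^+2*s + mu^+2) + 2*a^+2*mu^+2 + a*mu^+2
     = mu^+2 * (L + 2*f*s + 2*f + 2*a^+2 + a) by ring.
  apply: ler_wpM2l => //; apply: exprn_ge0; lra.
have -> : mu * mu^+3 = mu^+2 * mu^+2 by ring.
have e1 : L*(mu^+2 + 2*f*mu + 2*a^+2) = L*mu^+2 + 2*f*mu*L + 2*a^+2*L by ring.
lra.
Qed.

Lemma vertex_num (R : realFieldType) (al mu a D S1 cc : R) :
  0 <= al -> 0 < mu -> 2*a <= mu -> 0 <= a -> 0 <= D -> D <= a ->
  0 <= S1 -> S1 <= a^+2 -> cc <= al*mu ->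
  al*(D + S1/mu + D*(2*a^+2)/mu^+2) + cc <= mu*(al*(1 + D/mu + 2*a^+2/mu^+2)).
Proof.
move=> al0 mu0 mua a0 D0 Da S0 Sa ccm.
have key : S1/mu + D*(2*a^+2)/mu^+2 <= 2*a^+2/mu.
  have -> : S1/mu + D*(2*a^+2)/mu^+2 = (S1*mu + D*(2*a^+2))/mu^+2.
    by field; rewrite gt_eqF.
  have -> : 2*a^+2/mu = (2*a^+2*mu)/mu^+2 by field; rewrite gt_eqF.
  rewrite ler_pM2r ?invr_gt0 ?exprn_gt0 //.
  have : S1*mu <= a^+2*mu by rewrite ler_pM2r.
  have : D*(2*a^+2) <= a*(2*a^+2) by apply: ler_wpM2r => //; nra.
  have : a*(2*a^+2) <= a^+2*mu.
    have -> : a*(2*a^+2) = a^+2*(2*a) by ring.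
    by apply: ler_wpM2l => //; nra.
  lra.
have -> : mu*(al*(1 + D/mu + 2*a^+2/mu^+2)) = al*mu + al*D + al*(2*a^+2/mu).
  by field; rewrite gt_eqF.
have : al*(S1/mu + D*(2*a^+2)/mu^+2) <= al*(2*a^+2/mu) by apply: ler_wpM2l.
have -> : al*(D + S1/mu + D*(2*a^+2)/mu^+2) = al*D + al*(S1/mu + D*(2*a^+2)/mu^+2).
  by ring.
lra.
Qed.

Lemma final_num (R : realFieldType) (r s f g : R) :
  s + f - g <= r -> r <= s + f + g -> `|r - s - f| <= g.
Proof. by move=> h1 h2; rewrite ler_norml; apply/andP; split; lra. Qed.


Local Open Scope ring_scope.

Lemma lower_numC (s a e0 q N X c : algC) :
  s \is Creal -> a \is Creal -> e0 \is Creal -> q \is Creal -> N \is Creal ->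
  X \is Creal -> c \is Creal ->
  0 < s -> 1 <= a -> 0 <= e0 -> e0 + e0 <= a * a -> 0 <= q -> q <= a^+3 ->
  s^+2 = e0 + X -> 0 <= X -> a*N <= X + a -> X <= a*N -> (a+1)^+4 <= c ->
  (s + e0/a - c/s) * (a*s^+2 + 4*e0*s + q + a^+2*N)
    <= 2*e0*s^+2 + 2*s*q + 2*a*(N-1)*(a*s+2*e0).
Proof.
move=> sR aR eR qR NR XR cR h1 h2 h3 h4 h5 h6 h7 h8 h9 h10 h11.
have H := (@lower_num algR (in_algR sR) (in_algR aR) (in_algR eR) (in_algR qR)
  (in_algR NR) (in_algR XR) (in_algR cR) h1 h2 h3 h4 h5 h6
  (@val_inj _ _ _ (in_algR sR ^+ 2) (in_algR eR + in_algR XR) h7) h8 h9 h10 h11).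
exact H.
Qed.

Lemma upper_numC (s a e0 N X c : algC) :
  s \is Creal -> a \is Creal -> e0 \is Creal -> N \is Creal ->
  X \is Creal -> c \is Creal ->
  0 < s -> 1 <= a -> 0 <= e0 -> e0 + e0 <= a * a ->
  s^+2 = e0 + X -> a*N <= X + a + a -> 0 <= N -> (a+1)^+4 <= c ->
  2*a <= s + e0/a + c/s /\
  N/(s + e0/a + c/s) * (a + 2*e0/(s + e0/a + c/s)
     + a*(2*a^+2)/(s + e0/a + c/s)^+2) <= s + e0/a + c/s.
Proof.
move=> sR aR eR NR XR cR h1 h2 h3 h4 h5 h6 h7 h8.
exact: (@upper_num algR (in_algR sR) (in_algR aR) (in_algR eR)
  (in_algR NR) (in_algR XR) (in_algR cR) h1 h2 h3 h4
  (@val_inj _ _ _ (in_algR sR ^+ 2) (in_algR eR + in_algR XR) h5) h6 h7 h8).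
Qed.

Lemma vertex_numC (al mu a D S1 cc : algC) :
  al \is Creal -> mu \is Creal -> a \is Creal -> D \is Creal -> S1 \is Creal ->
  cc \is Creal ->
  0 <= al -> 0 < mu -> 2*a <= mu -> 0 <= a -> 0 <= D -> D <= a ->
  0 <= S1 -> S1 <= a^+2 -> cc <= al*mu ->
  al*(D + S1/mu + D*(2*a^+2)/mu^+2) + cc <= mu*(al*(1 + D/mu + 2*a^+2/mu^+2)).
Proof.
move=> alR muR aR DR SR cR.
exact: (@vertex_num algR (in_algR alR) (in_algR muR) (in_algR aR) (in_algR DR)
  (in_algR SR) (in_algR cR)).
Qed.

Lemma final_numC (r s f g : algC) :
  r \is Creal -> s \is Creal -> f \is Creal -> g \is Creal ->
  s + f - g <= r -> r <= s + f + g -> `|r - s - f| <= g.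
Proof.
move=> rR sR fR gR.
exact: (@final_num algR (in_algR rR) (in_algR sR) (in_algR fR) (in_algR gR)).
Qed.

End Num.

Section H2.
Local Open Scope ring_scope.

Lemma sum_splitA (T : finType) (A : {set T}) (F : T -> algC) :
  \sum_i F i = \sum_(i in A) F i + \sum_(i in ~: A) F i.
Proof. by rewrite (bigID (mem A)) /=; congr (_ + _); apply: eq_bigl => i; rewrite ?inE. Qed.

Lemma adj_herm (T : finType) (e : rel T) : symmetric e -> adjmx e \is hermsymmx.
Proof.
move=> esym; apply/is_hermitianmxP; rewrite expr0 scale1r.
by apply/matrixP => i j; rewrite !mxE conjC_nat esym.
Qed.

Lemma rayleighT (T : finType) (e : rel T) (x : T -> algC) (r : algC) :
  symmetric e -> (forall t, x t \is Creal) ->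
  (forall z, eigenvalue (adjmx e) z -> `|z| <= r) ->
  \sum_u \sum_v (e u v)%:R * (x u * x v) <= r * \sum_u x u ^+ 2.
Proof.
move=> esym xR hr.
pose xv := \row_i x (enum_val i) : 'rV[algC]_#|T|.
have := @rayleigh_mx _ (adjmx e) xv r (@adj_herm _ _ esym) _ hr.
have -> : (xv *m adjmx e *m xv^T) 0 0 = \sum_u \sum_v (e u v)%:R * (x u * x v).
  rewrite mxE; under eq_bigr => j _ do rewrite !mxE mulr_suml.
  rewrite exchange_big /= [RHS]sumT; apply: eq_bigr => i _; rewrite [RHS]sumT; apply: eq_bigr => j _.
  by rewrite !mxE mulrCA mulrA.
have -> : (xv *m xv^T) 0 0 = \sum_u x u ^+ 2.
  rewrite mxE [RHS]sumT; apply: eq_bigr => i _; by rewrite !mxE expr2.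
apply; move=> i; rewrite mxE; exact: xR.
Qed.

End H2.
Local Open Scope ring_scope.

Theorem lemma4p3 (K : nat) :
  exists c : algC, 0 <= c /\
  forall (T : finType) (e : rel T) (A : {set T}),
    symmetric e -> irreflexive e ->
    (#|A| <= K)%N ->
    (forall x y, x \notin A -> y \notin A -> ~~ e x y) ->
    (#|[set x | (x \notin A) && ~~ [forall a in A, e x a]]| <= 1)%N ->
    (0 < nedges e)%N ->
    forall r : algC, is_spectral_radius (adjmx e) r ->
      `| r - sqrtC (nedges e)%:R - (nedges_in e A)%:R / (#|A|)%:R |
        <= c / sqrtC (nedges e)%:R.
Proof.
exists ((K.+1 ^ 4)%N)%:R; split; first exact: ler0n.
move=> T e A esym eirr aK Cind hB m0 r [[z zeig zr] hr].
pose d u := (\sum_(v in A) e u v)%N.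
pose cc u := (\sum_(v in ~: A) e u v)%N.
pose X := (\sum_(u in A) cc u)%N.
pose p := (\sum_(u in A) (d u) ^ 2)%N.
pose N := #|~: A|.
have hm : nedges e = (nedges_in e A + X)%N by apply: edge_split.
have h2e0 : (\sum_(u in A) d u)%N = (nedges_in e A).*2 by rewrite pairs2.
have hd u : (d u <= #|A|)%N by apply: sum_b_le.
have hcc u : (cc u <= N)%N by apply: sum_b_le.
have hccl u : u \in A -> (N <= (cc u).+1)%N by move=> uA; apply: cc_lower.
have hXN : (X <= #|A| * N)%N.
  rewrite -sum_nat_const; apply: leq_sum => u _; exact: hcc.
have hNX : (#|A| * N <= X + #|A|)%N.
  have -> : (X + #|A| = \sum_(u in A) (cc u).+1)%N.
    rewrite /X -sum1_card -big_split; by apply: eq_bigr => u _; rewrite /= addn1.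
  by rewrite -sum_nat_const; apply: leq_sum => u uA; apply: hccl.
have he0a : ((nedges_in e A).*2 <= #|A| * #|A|)%N.
  rewrite -h2e0 -sum_nat_const; apply: leq_sum => u _; exact: hd.
have hp : (p <= #|A| ^ 3)%N.
  rewrite /p (_ : (#|A| ^ 3 = #|A| * #|A| ^ 2)%N); last by rewrite expnS.
  rewrite -sum_nat_const; apply: leq_sum => u _; rewrite leq_exp2r //; exact: hd.
have a1 : (0 < #|A|)%N.
  rewrite lt0n; apply/negP => /eqP a0.
  move: m0 he0a hXN; rewrite hm a0 !mul0n leqn0 -double0 => m0 /eqP /double_inj e00.
  by rewrite leqn0 => /eqP X0; rewrite e00 X0 in m0.
set a : algC := (#|A|)%:R.
set e0 : algC := (nedges_in e A)%:R.
set s := sqrtC (nedges e)%:R.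
set c : algC := ((K.+1 ^ 4)%N)%:R.
have aR : a \is Creal by apply: realn.
have e0R : e0 \is Creal by apply: realn.
have cR : c \is Creal by apply: realn.
have sR : s \is Creal by apply: sqrtC_real; apply: ler0n.
have rR : r \is Creal by rewrite -zr normr_real.
have s0 : 0 < s by rewrite sqrtC_gt0 ltr0n.
have a1C : 1 <= a by rewrite ler1n.
have e0aC : e0 + e0 <= a * a by rewrite -natrD -natrM ler_nat addnn.
have s2 : s^+2 = e0 + X%:R by rewrite sqrtCK hm natrD.
have ca : (a + 1)^+4 <= c by rewrite natr1 -natrX ler_nat leq_exp2r // ltnS.
have NX1 : a * (N.+1)%:R <= X%:R + a + a.
  rewrite -natrM -!natrD ler_nat mulnS; lia.
have [mua hup] := @upper_numC s a e0 (N.+1)%:R X%:R c sR aR e0R (@realn _ _) (@realn _ _) cR s0 a1C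
  (ler0n _ _) e0aC s2 NX1 (ler0n _ _) ca.
set mu := s + e0 / a + c / s in mua hup.
have mu0 : 0 < mu.
  apply: lt_le_trans mua; apply: mulr_gt0 => //; exact: lt_le_trans ltr01 a1C.
have muR : mu \is Creal by apply: gtr0_real.
pose al := (N.+1)%:R / mu.
have al0 : 0 <= al by apply: divr_ge0; [apply: ler0n | apply: ltW].
have alR : al \is Creal by apply: ger0_real.
have almu : al * mu = (N.+1)%:R by rewrite /al divfK // gt_eqF.
pose kap := 2 * a ^+ 2.
pose u t := if t \in A then al * (1 + (d t)%:R / mu + kap / mu ^+ 2) else 1.
have upos t : 0 < u t.
  rewrite /u; case: ifP => _ //; apply: mulr_gt0.
    by apply: divr_gt0 => //; apply: ltr0Sn.
  apply: (lt_le_trans ltr01); rewrite -addrA lerDl; apply: addr_ge0.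
    by apply: divr_ge0; [apply: ler0n | apply: ltW].
  apply: divr_ge0; last by apply: exprn_ge0; apply: ltW.
  by rewrite /kap; apply: mulr_ge0 => //; apply: exprn_ge0; apply: ler0n.
have mun0 : mu != 0 by rewrite gt_eqF.
have hu t : \sum_t' (e t t')%:R * u t' <= mu * u t.
  rewrite (@sum_splitA _ A).
  case tA: (t \in A).
  - have E1 : \sum_(t' in A) (e t t')%:R * u t' = al * ((d t)%:R
        + (\sum_(t' in A) e t t' * d t')%N%:R / mu + (d t)%:R * kap / mu ^+ 2).
      rewrite (eq_bigr (fun t' => al * (e t t')%:R + al / mu * (e t t' * d t')%N%:R
          + al * kap / mu ^+ 2 * (e t t')%:R)); last first.
        by move=> t' t'A; rewrite /u t'A natrM; field.
      rewrite !big_split /= -!mulr_sumr -!natr_sum /d; field; exact: mun0.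
    have E2 : \sum_(t' in ~: A) (e t t')%:R * u t' = (cc t)%:R.
      rewrite /cc natr_sum; apply: eq_bigr => t'; rewrite inE /u => /negbTE ->.
      by rewrite mulr1.
    rewrite E1 E2 /u tA /kap.
    apply: vertex_numC => //; try (apply: realn).
    + by rewrite ler_nat.
    + rewrite expr2 -natrM ler_nat -sum_nat_const; apply: leq_sum => t' _.
      by case: (e t t'); rewrite ?mul1n ?mul0n.
    + by rewrite almu ler_nat (leq_trans (hcc t)).
  - have E2 : \sum_(t' in ~: A) (e t t')%:R * u t' = 0.
      apply: big1 => t'; rewrite inE => t'A.
      by rewrite (negbTE (Cind _ _ (negbT tA) t'A)) mul0r.
    have E1 : \sum_(t' in A) (e t t')%:R * u t' <= \sum_(t' in A) u t'.
      apply: ler_sum => t' _; case: (e t t'); rewrite ?mul1r ?mul0r //.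
      exact: ltW.
    have E3 : \sum_(t' in A) u t' = al * (a + 2 * e0 / mu + a * (2 * a ^+ 2) / mu ^+ 2).
      rewrite (eq_bigr (fun t' => al + al / mu * (d t')%:R + al * kap / mu ^+ 2)); last first.
        by move=> t' t'A; rewrite /u t'A; field.
      rewrite !big_split /= -(mulr_sumr _ _ (fun i => (d i)%:R) (al / mu)) !sumr_const -natr_sum h2e0 -addnn natrD.
      rewrite -(mulr_natr al) -(mulr_natr (al * kap / mu ^+ 2)) /kap -/a -/e0.
      field; exact: mun0.
    rewrite E2 addr0 /u tA mulr1; apply: le_trans E1 _; rewrite E3; exact: hup.
have rup : r <= mu.
  by rewrite -zr; apply: (@collatz _ e u mu esym upos hu).
have N2 : (\sum_(w in A) \sum_(v in A) e w v * d w)%N = p.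
  apply: eq_bigr => w _; rewrite -big_distrl /= -/(d w); by rewrite expnS expn1.
have N3 : (\sum_(w in A) \sum_(v in A) e w v * d v)%N = p.
  rewrite exchange_big /=; apply: eq_bigr => v _.
  rewrite (eq_bigr (fun w => e v w * d v)%N); last by move=> w _; rewrite esym.
  by rewrite -big_distrl /= -/(d v) expnS expn1.
pose q : algC := p%:R.
pose x t := if t \in A then s + (d t)%:R else a.
have xR t : x t \is Creal.
  by rewrite /x; case: ifP => _ //; apply: rpredD => //; apply: realn.
have hQ := @rayleighT T e x r esym xR hr.
have Den : \sum_u x u ^+ 2 = a * s^+2 + 4 * e0 * s + q + a^+2 * N%:R.
  rewrite (@sum_splitA _ A).
  rewrite (eq_bigr (fun w => s^+2 + (2 * s) * (d w)%:R + ((d w) ^ 2)%N%:R)); last first.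
    by move=> w wA; rewrite /x wA natrX; ring.
  rewrite [X in _ + X](eq_bigr (fun _ => a ^+ 2)); last first.
    by move=> w; rewrite inE /x => /negbTE ->.
  rewrite !big_split /= -(mulr_sumr _ _ (fun i => (d i)%:R) (2 * s)) !sumr_const.
  rewrite -!natr_sum h2e0 -/p -/q -addnn natrD -/e0 /N.
  rewrite -(mulr_natr (s ^+ 2)) -(mulr_natr (a ^+ 2)) -/a; ring.
have Qlow : 2*e0*s^+2 + 2*s*q + 2*a*(N%:R-1)*(a*s+2*e0)
    <= \sum_u \sum_v (e u v)%:R * (x u * x v).
  pose F u v := (e u v)%:R * (x u * x v).
  have S4 : \sum_u \sum_v F u v =
      (\sum_(w in A) \sum_(v in A) F w v) + (\sum_(w in A) \sum_(v in ~: A) F w v)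
      + ((\sum_(w in ~: A) \sum_(v in A) F w v) + (\sum_(w in ~: A) \sum_(v in ~: A) F w v)).
    rewrite (@sum_splitA _ A); congr (_ + _);
      by rewrite -big_split; apply: eq_bigr => w _; exact: sum_splitA.
  have CC : \sum_(w in ~: A) \sum_(v in ~: A) F w v = 0.
    apply: big1 => w; rewrite inE => wA; apply: big1 => v; rewrite inE => vA.
    by rewrite /F (negbTE (Cind _ _ wA vA)) mul0r.
  have CA : \sum_(w in ~: A) \sum_(v in A) F w v = \sum_(w in A) \sum_(v in ~: A) F w v.
    rewrite exchange_big; apply: eq_bigr => w _; apply: eq_bigr => v _.
    by rewrite /F esym [x v * _]mulrC.
  have AC : \sum_(w in A) \sum_(v in ~: A) F w v = \sum_(w in A) (cc w)%:R * ((s + (d w)%:R) * a).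
    apply: eq_bigr => w wA; rewrite /cc natr_sum mulr_suml; apply: eq_bigr => v.
    by rewrite inE => vA; rewrite /F /x wA (negbTE vA).
  have AClow : (N%:R - 1) * a * (a * s + 2 * e0) <= \sum_(w in A) \sum_(v in ~: A) F w v.
    rewrite AC.
    have -> : (N%:R - 1) * a * (a * s + 2 * e0) = \sum_(w in A) (N%:R - 1) * ((s + (d w)%:R) * a).
      rewrite -mulr_sumr -mulr_suml big_split /= sumr_const -natr_sum h2e0 -addnn natrD -/e0.
      by rewrite -(mulr_natr s) -/a; ring.
    apply: ler_sum => w wA; apply: ler_wpM2r.
      by apply: mulr_ge0; [apply: addr_ge0; [apply: ltW | apply: ler0n] | apply: ler0n].
    by rewrite lerBlDr natr1 ler_nat; apply: hccl.
  have AAlow : 2*e0*s^+2 + 2*s*q <= \sum_(w in A) \sum_(v in A) F w v.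
    pose G w v := s^+2 * (e w v)%:R + s * (e w v * d w)%N%:R + s * (e w v * d v)%N%:R.
    have GE : \sum_(w in A) \sum_(v in A) G w v = 2*e0*s^+2 + 2*s*q.
      have N1 : (\sum_(w in A) \sum_(v in A) e w v)%N = (nedges_in e A).*2 := h2e0.
      transitivity (s^+2 * (\sum_(w in A) \sum_(v in A) e w v)%N%:R
          + s * (\sum_(w in A) \sum_(v in A) e w v * d w)%N%:R
          + s * (\sum_(w in A) \sum_(v in A) e w v * d v)%N%:R).
        rewrite !natr_sum !mulr_sumr -!big_split; apply: eq_bigr => w _.
        by rewrite !natr_sum !mulr_sumr -!big_split.
      by rewrite N1 N2 N3 -/q -addnn natrD -/e0; ring.
    rewrite -GE; apply: ler_sum => w wA; apply: ler_sum => v vA.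
    rewrite /G /F /x wA vA; case: (e w v); rewrite ?mul1n ?mul0n ?mulr0 ?mul0r ?addr0 //.
    rewrite mul1r.
    have -> : (s + (d w)%:R) * (s + (d v)%:R)
       = s ^+ 2 * 1 + s * (d w)%:R + s * (d v)%:R + (d w)%:R * (d v)%:R by ring.
    by rewrite lerDl; apply: mulr_ge0; apply: ler0n.
  rewrite -/F S4 CC CA addr0.
  apply: le_trans (lerD (lerD AAlow AClow) AClow).
  rewrite le_eqVlt; apply/orP; left; apply/eqP; ring.
have qa : q <= a ^+ 3 by rewrite /q /a -natrX ler_nat.
have NXa : a * N%:R <= X%:R + a by rewrite -natrM -natrD ler_nat.
have XNa : X%:R <= a * N%:R by rewrite -natrM ler_nat.
have L := @lower_numC s a e0 q N%:R X%:R c sR aR e0R (@realn _ _) (@realn _ _)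
  (@realn _ _) cR s0 a1C (ler0n _ _) e0aC (ler0n _ _) qa s2 (ler0n _ _) NXa XNa ca.
have Den0 : 0 < a * s^+2 + 4 * e0 * s + q + a^+2 * N%:R.
  have h1 : 0 < a * s^+2 by apply: mulr_gt0; [exact: lt_le_trans ltr01 a1C | exact: exprn_gt0].
  apply: (lt_le_trans h1); rewrite -!addrA lerDl.
  apply: addr_ge0; first by apply: mulr_ge0; [apply: mulr_ge0; [apply: ler0n | apply: ler0n] | exact: ltW].
  apply: addr_ge0; first exact: ler0n.
  by apply: mulr_ge0; [apply: exprn_ge0; apply: ler0n | apply: ler0n].
have rlow : s + e0 / a - c / s <= r.
  rewrite -(ler_pM2r Den0); apply: le_trans L _; apply: le_trans Qlow _.
  by rewrite -Den.
apply: final_numC => //.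
- by rewrite rpredM // rpredV.
- by rewrite rpredM // rpredV.
Qed.
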